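(* Let $0<p<1$ and let $\{a_n\}_{n\geq 0}$ be a sequence of non-negative real numbers such that $\left\{\frac{1}{n+1}a^x_n(p)\right\}_{n\geq 0}$ converges to a finite limit $a\in\mathbb{R}$, where $$a^x_n(p)=\sum_{i=0}^{\lfloor pn-\epsilon(n)\rfloor}w_n^i(p)\, a_i.$$ Then $\{a^*_n\}_{n\geq 0}$ converges to $a$.
   Context: $a^*_n=\frac{1}{n+1}\sum_{i=0}^n a_i$. For $0<p<1$, $n\in\mathbb{N}$ and $0\le i\le n$, $w_n^i(p)=\sum_{j=i}^n\binom{j}{i}p^i(1-p)^{j-i}$. $\epsilon(n)=\sqrt{n}\log n$ for $n\geq2$ and $\epsilon(n)=1$ otherwise; a sum whose upper index is negative is $0$. *)

(* Defs.v *)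
From Stdlib Require Import Reals Lra Lia ZArith List.
Open Scope R_scope.

(* sumR m n f = f m + f (m+1) + ... + f n  (0 if n < m). *)
Definition sumR (m n : nat) (f : nat -> R) : R :=
  fold_right Rplus 0 (map f (seq m (S n - m))).

Definition astar (a : nat -> R) (n : nat) : R :=
  / (INR n + 1) * sumR 0 n a.

Definition w (p : R) (n i : nat) : R :=
  sumR i n (fun j => C j i * p ^ i * (1 - p) ^ (j - i)).

Definition eps (n : nat) : R :=
  if (2 <=? n)%nat then sqrt (INR n) * ln (INR n) else 1.

(* a^x_n(p) = sum_{i=0}^{floor(p n - eps n)} w_n^i(p) a_i, empty (=0) when
   the upper index is negative. Int_part x is the floor of x. *)
Definition ax (a : nat -> R) (p : R) (n : nat) : R :=
  let m := Int_part (p * INR n - eps n) in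
  if (m <? 0)%Z then 0 else sumR 0 (Z.to_nat m) (fun i => w p n i * a i).

(* Main.v *)
Require Import Defs.
From Stdlib Require Import Reals Lra Lia List ZArith.
Open Scope R_scope.

Lemma sumR_nil i n f : (n < i)%nat -> sumR i n f = 0.
Proof. intro H. unfold sumR. replace (S n - i)%nat with 0%nat by lia. reflexivity. Qed.

Lemma sumR_S i n f : (i <= S n)%nat -> sumR i (S n) f = sumR i n f + f (S n).
Proof.
  intro H. unfold sumR. replace (S (S n) - i)%nat with (S (S n - i)) by lia.
  rewrite List.seq_S, map_app, fold_right_app. cbn [fold_right map].
  replace (i + (S n - i))%nat with (S n) by lia.
  generalize (map f (List.seq i (S n - i))). intro l.
  induction l; cbn [fold_right map]. lra. rewrite IHl. lra.
Qed.

Lemma sumR_0 n f : sumR 0 n f = sum_f_R0 f n.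
Proof.
  induction n. unfold sumR; simpl; lra.
  rewrite sumR_S by lia. rewrite IHn. reflexivity.
Qed.

Fixpoint B (p : R) (N k : nat) : R :=
  match N, k with
  | O, O => 1
  | O, S _ => 0
  | S N', O => (1 - p) * B p N' O
  | S N', S k' => (1 - p) * B p N' (S k') + p * B p N' k'
  end.

Section S.
Variable p : R.
Hypothesis Hp : 0 < p < 1.

Lemma B_nonneg N k : 0 <= B p N k.
Proof.
  revert k; induction N; intros [|k]; simpl; try lra.
  - specialize (IHN 0%nat). nra.
  - pose proof (IHN k). pose proof (IHN (S k)). nra.
Qed.

Lemma B_zero N k : (N < k)%nat -> B p N k = 0.
Proof.
  revert k; induction N; intros [|k] H; simpl; try lia; try lra.
  rewrite !IHN by lia. ring.
Qed.

Definition G N i := sum_f_R0 (B p N) i.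

Lemma G_S N i : G (S N) i = G N i - p * B p N i.
Proof.
  unfold G. induction i; simpl. ring.
  simpl in IHi. rewrite IHi. ring.
Qed.

Lemma G_0 i : G 0 i = 1.
Proof. unfold G in *. induction i. reflexivity. rewrite tech5, IHi. simpl. ring. Qed.

Lemma G_full N i : (N <= i)%nat -> G N i = 1.
Proof.
  revert i; induction N; intros i H. apply G_0.
  rewrite G_S, IHN, B_zero by lia. ring.
Qed.

Lemma G_nonneg N i : 0 <= G N i.
Proof. unfold G. apply cond_pos_sum. intro; apply B_nonneg. Qed.

Lemma G_mono N i k : (i <= k)%nat -> G N i <= G N k.
Proof.
  intro H. induction H. lra. unfold G in *; simpl. pose proof (B_nonneg N (S m)). lra.
Qed.

Lemma C_n0 n : C n 0 = 1.
Proof. unfold C. rewrite Nat.sub_0_r. simpl. field. apply INR_fact_neq_0. Qed.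
Lemma C_nn n : C n n = 1.
Proof. unfold C. rewrite Nat.sub_diag. simpl. field. apply INR_fact_neq_0. Qed.

Lemma C_B j i : (i <= j)%nat -> C j i * p ^ i * (1 - p) ^ (j - i) = B p j i.
Proof.
  revert i; induction j; intros i H.
  - replace i with 0%nat by lia. simpl. rewrite C_n0. ring.
  - destruct i as [|i].
    + simpl. rewrite C_n0, <- IHj by lia. rewrite C_n0. simpl. rewrite Nat.sub_0_r. ring.
    + simpl. destruct (Nat.eq_dec i j) as [->|Hij].
      * rewrite B_zero by lia. rewrite <- IHj by lia. rewrite !C_nn, Nat.sub_diag. simpl. ring.
      * rewrite <- !IHj by lia. rewrite <- pascal by lia.
        replace (j - i)%nat with (S (j - S i)) by lia. simpl. ring.
Qed.

Lemma pw n i : p * w p n i = 1 - G (S n) i.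
Proof.
  unfold w. induction n.
  - destruct i.
    + unfold sumR. simpl. rewrite C_n0. unfold G; simpl. ring.
    + rewrite sumR_nil by lia. rewrite G_full by lia. ring.
  - destruct (Compare_dec.le_lt_dec i (S n)).
    + rewrite sumR_S by lia. rewrite Rmult_plus_distr_l, IHn, C_B by lia.
      rewrite (G_S (S n)). ring.
    + rewrite sumR_nil by lia. rewrite G_full by lia. ring.
Qed.

Lemma recB f N K :
  sum_f_R0 (fun j => f j * B p (S N) j) (S K) =
  (1 - p) * sum_f_R0 (fun j => f j * B p N j) (S K) + p * sum_f_R0 (fun j => f (S j) * B p N j) K.
Proof.
  induction K.
  - simpl. ring.
  - change (sum_f_R0 (fun j => f j * B p (S N) j) (S (S K))) with
      (sum_f_R0 (fun j => f j * B p (S N) j) (S K) + f (S (S K)) * B p (S N) (S (S K))).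
    rewrite IHK. simpl. ring.
Qed.

Lemma sumB0 g K : sum_f_R0 (fun j => g j * B p 0 j) K = g 0%nat.
Proof. induction K. simpl. ring. rewrite tech5, IHK. simpl. ring. Qed.

Lemma moment N K a b c : (N <= K)%nat ->
  sum_f_R0 (fun j => (a + b * INR j + c * INR j ^ 2) * B p N j) K =
  a + b * (INR N * p) + c * (INR N * p * (1 - p) + (INR N * p) ^ 2).
Proof.
  revert K a b c; induction N; intros K a b c H.
  - rewrite sumB0. simpl. ring.
  - destruct K as [|K]; [lia|].
    rewrite (recB (fun j => a + b * INR j + c * INR j ^ 2)).
    rewrite (sum_eq (fun j => (a + b * INR (S j) + c * INR (S j) ^ 2) * B p N j)
               (fun j => ((a + b + c) + (b + 2 * c) * INR j + c * INR j ^ 2) * B p N j)).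
    2:{ intros. rewrite S_INR. ring. }
    rewrite !IHN by lia. rewrite S_INR. ring.
Qed.

Lemma sum_ext_le f k d : (forall j, 0 <= f j) -> sum_f_R0 f k <= sum_f_R0 f (k + d).
Proof.
  intro Hf. induction d. rewrite Nat.add_0_r; lra.
  rewrite Nat.add_succ_r. simpl. specialize (Hf (S (k + d))). lra.
Qed.

Lemma cheb N k : INR k < INR N * p ->
  G N k * (INR N * p - INR k) ^ 2 <= INR N * p * (1 - p).
Proof.
  intro H. unfold G. rewrite Rmult_comm, scal_sum.
  apply Rle_trans with (sum_f_R0 (fun j => ((INR N * p)^2 + (-2 * (INR N * p)) * INR j + 1 * INR j ^ 2) * B p N j) k).
  - apply sum_Rle. intros j Hj. apply le_INR in Hj. pose proof (B_nonneg N j).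
    assert ((INR N * p - INR k) ^ 2 <= (INR j - INR N * p) ^ 2) by nra.
    replace ((INR N * p) ^ 2 + -2 * (INR N * p) * INR j + 1 * INR j ^ 2) with ((INR j - INR N * p) ^ 2) by ring.
    rewrite (Rmult_comm _ (B p N j)). apply Rmult_le_compat_l; lra.
  - apply Rle_trans with (sum_f_R0 (fun j => ((INR N * p)^2 + (-2 * (INR N * p)) * INR j + 1 * INR j ^ 2) * B p N j) (k + N)).
    + apply sum_ext_le. intro j. pose proof (B_nonneg N j). apply Rmult_le_pos; [|lra].
      replace ((INR N * p) ^ 2 + -2 * (INR N * p) * INR j + 1 * INR j ^ 2) with ((INR j - INR N * p) ^ 2) by ring.
      apply pow2_ge_0.
    + rewrite moment by lia. nra.
Qed.

End S.

Lemma bigN X : exists N, forall n, (N <= n)%nat -> X < INR n.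
Proof.
  destruct (archimed (Rabs X)) as [H1 _].
  assert (Hz : (0 < up (Rabs X))%Z). { apply lt_IZR. pose proof (Rabs_pos X). simpl. lra. }
  exists (Z.to_nat (up (Rabs X))). intros n Hn. apply le_INR in Hn.
  rewrite INR_IZR_INZ, Z2Nat.id in Hn by lia. pose proof (Rle_abs X). lra.
Qed.

Lemma ln_pos n : (2 <= n)%nat -> 0 < ln (INR n).
Proof.
  intro H. rewrite <- ln_1. apply ln_increasing. lra.
  apply le_INR in H. simpl in H. lra.
Qed.

Lemma eps_eq n : (2 <= n)%nat -> eps n = sqrt (INR n) * ln (INR n).
Proof. intro H. unfold eps. replace (2 <=? n)%nat with true. reflexivity. symmetry; apply Nat.leb_le; lia. Qed.

Lemma eps_pos n : (2 <= n)%nat -> 0 < eps n.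
Proof.
  intro H. rewrite eps_eq by lia. apply Rmult_lt_0_compat. apply sqrt_lt_R0.
  apply le_INR in H; simpl in H; lra. apply ln_pos; lia.
Qed.

Lemma eps_sq n : (2 <= n)%nat -> eps n ^ 2 = INR n * ln (INR n) ^ 2.
Proof.
  intro H. rewrite eps_eq by lia. simpl. rewrite !Rmult_1_r.
  replace (sqrt (INR n) * ln (INR n) * (sqrt (INR n) * ln (INR n))) with
    ((sqrt (INR n) * sqrt (INR n)) * (ln (INR n) * ln (INR n))) by ring.
  rewrite sqrt_sqrt. ring. apply pos_INR.
Qed.

Lemma eps_mono n : (2 <= n)%nat -> eps n <= eps (S n).
Proof.
  intro H. rewrite !eps_eq by lia. rewrite S_INR.
  assert (0 < INR n) by (apply le_INR in H; simpl in H; lra).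
  apply Rmult_le_compat.
  - apply sqrt_pos.
  - pose proof (ln_pos n H); lra.
  - apply sqrt_le_1_alt; lra.
  - left; apply ln_increasing; lra.
Qed.

Definition mZ p n := Int_part (p * INR n - eps n).

Lemma mZ_step p n : 0 < p < 1 -> (2 <= n)%nat -> (mZ p (S n) <= mZ p n + 1)%Z.
Proof.
  intros Hp H. unfold mZ.
  destruct (base_Int_part (p * INR n - eps n)) as [A1 A2].
  destruct (base_Int_part (p * INR (S n) - eps (S n))) as [B1 B2].
  pose proof (eps_mono n H). rewrite S_INR in *.
  assert (IZR (Int_part (p * (INR n + 1) - eps (S n))) < IZR (Int_part (p * INR n - eps n) + 2)).
  { rewrite plus_IZR. simpl. lra. }
  apply lt_IZR in H1. lia.
Qed.

Section K.
Variable p : R.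
Hypothesis Hp : 0 < p < 1.
Variable a : nat -> R.
Hypothesis Ha : forall n, 0 <= a n.

Lemma key n : (2 <= n)%nat -> (0 <= mZ p n)%Z ->
  let k := Z.to_nat (mZ p n) in
  p * ax a p n <= sum_f_R0 a k /\
  (1 - G p (S n) k) * sum_f_R0 a k <= p * ax a p n /\
  G p (S n) k * ln (INR n) ^ 2 <= 2.
Proof.
  intros H Hm k.
  assert (Hax : ax a p n = sum_f_R0 (fun i => w p n i * a i) k).
  { unfold ax. cbv zeta. fold (mZ p n).
    replace (mZ p n <? 0)%Z with false by (symmetry; apply Z.ltb_ge; lia).
    apply sumR_0. }
  assert (Hs : p * ax a p n = sum_f_R0 (fun i => (1 - G p (S n) i) * a i) k).
  { rewrite Hax, scal_sum. apply sum_eq. intros i _.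
    rewrite <- (pw p). ring. }
  split; [|split].
  - rewrite Hs. apply sum_Rle. intros i _. pose proof (G_nonneg p Hp (S n) i).
    pose proof (Ha i). nra.
  - rewrite Hs, scal_sum. apply sum_Rle. intros i Hi.
    pose proof (G_mono p Hp (S n) i k Hi). pose proof (Ha i). nra.
  - assert (Hk : INR k = IZR (mZ p n)).
    { unfold k. rewrite INR_IZR_INZ, Z2Nat.id by lia. reflexivity. }
    destruct (base_Int_part (p * INR n - eps n)) as [A1 A2]. fold (mZ p n) in A1, A2.
    pose proof (eps_pos n H). pose proof (eps_sq n H).
    assert (Hlt : INR k < INR (S n) * p) by (rewrite S_INR; nra).
    pose proof (cheb p Hp (S n) k Hlt) as C.
    rewrite S_INR in C. set (D := (INR n + 1) * p - INR k) in *.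
    assert (HD : eps n <= D) by (unfold D; nra).
    assert (eps n ^ 2 <= D ^ 2) by nra.
    pose proof (G_nonneg p Hp (S n) k).
    assert (Hn : 2 <= INR n) by (apply le_INR in H; simpl in H; lra).
    set (L := ln (INR n)) in *. set (g := G p (S n) k) in *.
    assert (g * (INR n * L ^ 2) <= (INR n + 1) * p * (1 - p)) by nra.
    assert ((INR n + 1) * p * (1 - p) <= 2 * INR n) by nra.
    nra.
Qed.
End K.

Definition sq n := sqrt (sqrt (INR n)).

Lemma sfacts n : (2 <= n)%nat -> 1 < sq n /\ INR n = sq n ^ 4 /\ eps n < 4 * sq n ^ 3.
Proof.
  intro H. unfold sq. assert (Hn : 2 <= INR n) by (apply le_INR in H; simpl in H; lra).
  set (t := sqrt (INR n)). set (s := sqrt t).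
  assert (Ht : 1 < t). { unfold t. rewrite <- sqrt_1. apply sqrt_lt_1_alt. lra. }
  assert (Hs : 1 < s). { unfold s. rewrite <- sqrt_1. apply sqrt_lt_1_alt. lra. }
  assert (Htt : t * t = INR n) by (unfold t; apply sqrt_sqrt; lra).
  assert (Hss : s * s = t) by (unfold s; apply sqrt_sqrt; lra).
  assert (Hln : ln (INR n) = 4 * ln s).
  { rewrite <- Htt, <- Hss. rewrite !ln_mult by nra. ring. }
  assert (Hls : ln s < s).
  { assert (0 < ln s) by (rewrite <- ln_1; apply ln_increasing; lra).
    pose proof (exp_ineq1 (ln s)). rewrite exp_ln in H1 by lra. lra. }
  assert (0 < ln s) by (rewrite <- ln_1; apply ln_increasing; lra).
  split; [lra|split].
  - rewrite <- Htt, <- Hss. ring.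
  - rewrite eps_eq by lia. fold t. rewrite Hln, <- Hss. nra.
Qed.

Lemma growth T : exists N, forall n, (N <= n)%nat -> T < sq n.
Proof.
  set (T' := Rmax T 1).
  destruct (bigN (T' ^ 4)) as [N HN]. exists N. intros n Hn. specialize (HN n Hn).
  assert (T <= T') by apply Rmax_l. assert (1 <= T') by apply Rmax_r.
  unfold sq.
  assert (T' ^ 2 < sqrt (INR n)).
  { rewrite <- (sqrt_pow2 (T' ^ 2)) by nra. apply sqrt_lt_1_alt. split. nra.
    replace ((T' ^ 2) ^ 2) with (T' ^ 4) by ring. lra. }
  assert (T' < sqrt (sqrt (INR n))).
  { rewrite <- (sqrt_pow2 T') by lra. apply sqrt_lt_1_alt. split; nra. }
  lra.
Qed.

Lemma lowerm p n : 0 < p < 1 -> (2 <= n)%nat -> 8 <= p * sq n ->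
  IZR (mZ p n) + 1 > 4 * sq n /\ IZR (mZ p n) + 1 > p * sq n ^ 4 / 2.
Proof.
  intros Hp H Hps. destruct (sfacts n H) as [Hs [Hn He]].
  destruct (base_Int_part (p * INR n - eps n)) as [A1 A2]. fold (mZ p n) in A1, A2.
  set (s := sq n) in *.
  assert (p * s ^ 4 - 4 * s ^ 3 >= p * s ^ 4 / 2).
  { assert (0 < s ^ 3) by (apply pow_lt; lra). nra. }
  assert (p * s ^ 4 / 2 >= 4 * s).
  { assert (1 <= s ^ 2) by nra. nra. }
  split; nra.
Qed.

Lemma rho_cv p : 0 < p < 1 ->
  Un_cv (fun n => p * (INR n + 1) / (IZR (mZ p n) + 1)) 1.
Proof.
  intros Hp e He.
  destruct (growth (8 / p + 10 / (p * e))) as [N HN].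
  exists (max N 2). intros n Hn. specialize (HN n ltac:(lia)).
  assert (H2 : (2 <= n)%nat) by lia.
  destruct (sfacts n H2) as [Hs [Hn' He']].
  assert (0 < 8 / p) by (apply Rdiv_lt_0_compat; lra).
  assert (0 < 10 / (p * e)) by (apply Rdiv_lt_0_compat; nra).
  set (s := sq n) in *.
  assert (Hps : 8 <= p * s).
  { assert (8 / p < s) by lra. apply (Rmult_lt_compat_l p) in H1; [|lra].
    field_simplify in H1; lra. }
  assert (Hpes : 10 <= p * e * s).
  { assert (10 / (p * e) < s) by lra. apply (Rmult_lt_compat_l (p * e)) in H1; [|nra].
    field_simplify in H1; lra. }
  destruct (lowerm p n Hp H2 Hps) as [L1 L2]. fold s in L1, L2.
  destruct (base_Int_part (p * INR n - eps n)) as [A1 A2]. fold (mZ p n) in A1, A2.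
  pose proof (eps_pos n H2).
  set (M := IZR (mZ p n) + 1) in *.
  assert (HM : 0 < M) by nra.
  unfold R_dist.
  replace (p * (INR n + 1) / M - 1) with ((p * (INR n + 1) - M) * / M) by (field; lra).
  assert (HX : Rabs (p * (INR n + 1) - M) < e * M).
  { assert (1 < s ^ 3) by (apply Rlt_pow_R1; [lra|lia]).
    assert (e * M > 5 * s ^ 3).
    { assert (e * M > e * (p * s ^ 4 / 2)) by (apply Rmult_lt_compat_l; lra).
      assert (0 < s ^ 3) by lra.
      assert (0 <= (p * e * s - 10) * s ^ 3) by (apply Rmult_le_pos; lra).
      replace (s ^ 4) with (s * s ^ 3) in H3 by ring. nra. }
    apply Rabs_def1; unfold M in *; lra. }
  assert (HiM : 0 < / M) by (apply Rinv_0_lt_compat; lra).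
  assert (HMM : M * / M = 1) by (field; lra).
  rewrite Rabs_mult, (Rabs_right (/ M)) by lra.
  pose proof (Rabs_pos (p * (INR n + 1) - M)). nra.
Qed.

Lemma surj (f : nat -> Z) N0 :
  (forall n, (N0 <= n)%nat -> (f (S n) <= f n + 1)%Z) ->
  forall d k, (f N0 <= k)%Z -> (k <= f (N0 + d)%nat)%Z -> exists n, (N0 <= n)%nat /\ f n = k.
Proof.
  intros Hst d. induction d; intros k H1 H2.
  - exists N0. rewrite Nat.add_0_r in H2. split; [lia|lia].
  - destruct (Z_le_gt_dec k (f (N0 + d)%nat)).
    + apply IHd; auto.
    + exists (N0 + S d)%nat. split; [lia|].
      rewrite Nat.add_succ_r in *. specialize (Hst (N0 + d)%nat ltac:(lia)). lia.
Qed.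

Theorem lemma10 (p : R) (a : nat -> R) (l : R) :
  0 < p < 1 ->
  (forall n, 0 <= a n) ->
  Un_cv (fun n => / (INR n + 1) * ax a p n) l ->
  Un_cv (astar a) l.
Proof.
  intros Hp Ha Hx.
  pose proof (CV_mult _ _ _ _ (rho_cv p Hp) Hx) as Hy. rewrite Rmult_1_l in Hy.
  intros e He.
  set (eta := e / (4 * (Rabs l + 1))).
  assert (Heta : 0 < eta) by (unfold eta; apply Rdiv_lt_0_compat; [lra|pose proof (Rabs_pos l); lra]).
  destruct (Hy (Rmin (e / 2) 1)) as [N1 HN1].
  { apply Rmin_pos; lra. }
  set (ML := Rmax 2 (2 / eta)).
  destruct (bigN (exp ML)) as [N2 HN2].
  destruct (growth (8 / p)) as [N3 HN3].
  set (N0 := max (max N1 N2) (max N3 2)).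
  assert (HN0 : forall n, (N0 <= n)%nat ->
     (2 <= n)%nat /\ 8 <= p * sq n /\ ML < ln (INR n) /\ (0 <= mZ p n)%Z).
  { intros n Hn. assert (H2 : (2 <= n)%nat) by lia. split; [lia|].
    assert (8 <= p * sq n).
    { specialize (HN3 n ltac:(lia)). assert (0 < 8 / p) by (apply Rdiv_lt_0_compat; lra).
      apply (Rmult_lt_compat_l p) in HN3; [|lra]. field_simplify in HN3; lra. }
    split; [lra|split].
    - specialize (HN2 n ltac:(lia)). rewrite <- (ln_exp ML). apply ln_increasing.
      apply exp_pos. lra.
    - destruct (lowerm p n Hp H2 H) as [L1 _]. destruct (sfacts n H2) as [Hs _].
      apply le_IZR. simpl. lra. }
  exists (Z.to_nat (mZ p N0)). intros k Hk.
  (* find n with mZ p n = k *)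
  destruct (growth (8 / p + INR k)) as [N4 HN4].
  set (n1 := max N0 N4).
  assert (Hn1 : (Z.of_nat k <= mZ p n1)%Z).
  { destruct (HN0 n1 ltac:(lia)) as [H2 [H8 _]].
    destruct (lowerm p n1 Hp H2 H8) as [L1 _]. destruct (sfacts n1 H2) as [Hs _].
    specialize (HN4 n1 ltac:(lia)).
    assert (0 < 8 / p) by (apply Rdiv_lt_0_compat; lra).
    apply le_IZR. rewrite <- INR_IZR_INZ. lra. }
  destruct (surj (mZ p) N0 (fun n Hn => mZ_step p n Hp ltac:(lia)) (n1 - N0) (Z.of_nat k))
    as [n [Hn Hmn]].
  { destruct (HN0 N0 ltac:(lia)) as [_ [_ [_ H0]]]. lia. }
  { replace (N0 + (n1 - N0))%nat with n1 by lia. exact Hn1. }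
  destruct (HN0 n Hn) as [H2 [H8 [Hln Hm0]]].
  destruct (key p Hp a Ha n H2 Hm0) as [K1 [K2 K3]].
  assert (Hk' : Z.to_nat (mZ p n) = k) by (rewrite Hmn; apply Nat2Z.id).
  rewrite Hk' in K1, K2, K3.
  specialize (HN1 n ltac:(lia)). unfold R_dist in *.
  assert (HIk : IZR (mZ p n) = INR k) by (rewrite Hmn, INR_IZR_INZ; reflexivity).
  rewrite HIk in HN1.
  set (Ss := sum_f_R0 a k) in *. set (g := G p (S n) k) in *.
  set (X := ax a p n) in *.
  assert (Hk0 : 0 < INR k + 1) by (pose proof (pos_INR k); lra).
  assert (Hn0 : 0 < INR n + 1) by (pose proof (pos_INR n); lra).
  replace (p * (INR n + 1) / (INR k + 1) * (/ (INR n + 1) * X)) with (p * X / (INR k + 1)) in HN1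
    by (field; lra).
  unfold astar. rewrite sumR_0. fold Ss.
  set (A := / (INR k + 1) * Ss). set (Y := p * X / (INR k + 1)) in *.
  assert (HY1 : Y <= A).
  { unfold Y, A. unfold Rdiv. rewrite Rmult_comm. apply Rmult_le_compat_l; [|lra].
    left; apply Rinv_0_lt_compat; lra. }
  assert (HY2 : (1 - g) * A <= Y).
  { unfold Y, A. unfold Rdiv. replace ((1 - g) * (/ (INR k + 1) * Ss)) with (/ (INR k + 1) * ((1 - g) * Ss)) by ring.
    rewrite (Rmult_comm (p * X)). apply Rmult_le_compat_l; [|lra].
    left; apply Rinv_0_lt_compat; lra. }
  assert (Hg0 : 0 <= g) by (apply G_nonneg; lra).
  assert (HA0 : 0 <= A).
  { unfold A. apply Rmult_le_pos. left; apply Rinv_0_lt_compat; lra.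
    apply cond_pos_sum; auto. }
  assert (HML : 2 <= ML /\ 2 / eta <= ML) by (split; [apply Rmax_l|apply Rmax_r]).
  set (L := ln (INR n)) in *.
  assert (Hg : g <= eta / 2).
  { assert (2 * (2 / eta) <= L * L) by nra.
    assert (g * (2 * (2 / eta)) <= 2) by nra.
    assert (eta * (2 / eta) = 2) by (field; lra).
    nra. }
  assert (HYl : Rabs (Y - l) < e / 2 /\ Rabs (Y - l) < 1).
  { split; eapply Rlt_le_trans; try apply HN1; [apply Rmin_l|apply Rmin_r]. }
  destruct HYl as [HYl1 HYl2].
  assert (HYb : Y <= Rabs l + 1).
  { apply Rabs_def2 in HYl2. pose proof (Rle_abs l). lra. }
  assert (Hg2 : g <= 1 / 2).
  { assert (4 <= L * L) by nra. nra. }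
  assert (HAb : A <= 2 * (Rabs l + 1)) by nra.
  assert (HgA : g * A <= eta * (2 * (Rabs l + 1))).
  { apply Rmult_le_compat; lra. }
  assert (Heq : eta * (2 * (Rabs l + 1)) = e / 2).
  { unfold eta. field. pose proof (Rabs_pos l). lra. }
  apply Rabs_def2 in HYl1. apply Rabs_def1; nra.
Qed.
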